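(* Let $G$ be a finitely generated group and let $R_1<R_2<\cdots$ be an ascending sequence of limit groups over free products that are quotients of $G$. Then there exists a limit group over free products $R$, a quotient of $G$, such that $R>R_m$ for every $m$.
   Context: Elliptic element of $A*B$: one lying in a conjugate of $A$ or $B$. A limit quotient over free products $(L,\eta)$ of $G$, $L=G/K$ with elliptic set $E_L$, arises from a convergent sequence $h_n:G\to A_n*B_n$ (for each $g$, eventually $h_n(g)=1$ or eventually $\ne1$, and eventually elliptic or eventually non-elliptic; $K$ = elements eventually mapped to 1; $E_L$ = images of elements eventually mapped to elliptics). Partial order: $(L_1,\eta_1)>(L_2,\eta_2)$ if there is an epimorphism $\tau:L_1\to L_2$ with $\eta_2=\tau\circ\eta_1$, $\tau(E_{L_1})\subset E_{L_2}$, and either $\ker\tau\ne1$ or $\tau$ is an isomorphism with $\tau(E_{L_1})\subsetneq E_{L_2}$. *)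

(* Defs.v *)
From Stdlib Require Import Arith.


Record Group := {
  carrier :> Type;
  gmul : carrier -> carrier -> carrier;
  gone : carrier;
  ginv : carrier -> carrier;
  gmulA : forall x y z, gmul x (gmul y z) = gmul (gmul x y) z;
  gmul1l : forall x, gmul gone x = x;
  gmulVl : forall x, gmul (ginv x) x = gone
}.

Arguments gmul {g}.
Arguments gone {g}.
Arguments ginv {g}.

Definition is_hom (A B : Group) (f : A -> B) : Prop :=
  forall x y, f (gmul x y) = gmul (f x) (f y).

Arguments is_hom {A B} f.

Definition surjective (A B : Type) (f : A -> B) : Prop := forall y, exists x, f x = y.
Definition injective (A B : Type) (f : A -> B) : Prop := forall x y, f x = f y -> x = y.

Inductive generated (G : Group) (S : list (carrier G)) : carrier G -> Prop :=
  | gen_one : generated G S gone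
  | gen_elt : forall s, List.In s S -> generated G S s
  | gen_inv : forall x, generated G S x -> generated G S (ginv x)
  | gen_mul : forall x y, generated G S x -> generated G S y -> generated G S (gmul x y).

Arguments surjective {A B} f.
Arguments injective {A B} f.

Definition finitely_generated (G : Group) : Prop :=
  exists S : list G, forall g : G, generated G S g.

Definition is_free_product (A B F : Group) (iA : A -> F) (iB : B -> F) : Prop :=
  is_hom iA /\ is_hom iB /\
  forall (H : Group) (f : A -> H) (g : B -> H), is_hom f -> is_hom g ->
    exists phi : F -> H, is_hom phi /\
      (forall a, phi (iA a) = f a) /\ (forall b, phi (iB b) = g b) /\
      (forall psi : F -> H, is_hom psi ->
         (forall a, psi (iA a) = f a) -> (forall b, psi (iB b) = g b) ->
         forall x, psi x = phi x).

Arguments is_free_product {A B F} iA iB.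

Record FreeProduct := {
  fpA : Group;
  fpB : Group;
  fpF : Group;
  fp_iA : fpA -> fpF;
  fp_iB : fpB -> fpF;
  fp_ok : is_free_product fp_iA fp_iB
}.

Definition elliptic (P : FreeProduct) (x : fpF P) : Prop :=
  (exists (c : fpF P) (a : fpA P), x = gmul (ginv c) (gmul (fp_iA P a) c)) \/
  (exists (c : fpF P) (b : fpB P), x = gmul (ginv c) (gmul (fp_iB P b) c)).

Arguments elliptic {P} x.

Definition eventually (Q : nat -> Prop) : Prop := exists N, forall n, N <= n -> Q n.

Record HomSeq (G : Group) := {
  hs_fp : nat -> FreeProduct;
  hs_h : forall n, G -> fpF (hs_fp n);
  hs_hom : forall n, is_hom (hs_h n)
}.

Arguments hs_fp {G} h n.
Arguments hs_h {G} h n _.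

Definition convergent (G : Group) (s : HomSeq G) : Prop :=
  forall g : G,
    (eventually (fun n => hs_h s n g = gone) \/
     eventually (fun n => hs_h s n g <> gone)) /\
    (eventually (fun n => elliptic (hs_h s n g)) \/
     eventually (fun n => ~ elliptic (hs_h s n g))).

Arguments convergent {G} s.

(** A quotient (L, eta) of G together with a distinguished (elliptic) subset E_L *)
Record Quot (G : Group) := {
  q_L : Group;
  q_eta : G -> q_L;
  q_E : q_L -> Prop
}.

Arguments q_L {G} q.
Arguments q_eta {G} q _.
Arguments q_E {G} q _.

Definition is_limit_quotient (G : Group) (R : Quot G) : Prop :=
  is_hom (q_eta R) /\ surjective (q_eta R) /\
  exists s : HomSeq G, convergent s /\
    (forall g : G, q_eta R g = gone <-> eventually (fun n => hs_h s n g = gone)) /\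
    (forall x : q_L R, q_E R x <->
        exists g : G, q_eta R g = x /\ eventually (fun n => elliptic (hs_h s n g))).

Arguments is_limit_quotient {G} R.

Definition lq_gt (G : Group) (R1 R2 : Quot G) : Prop :=
  exists tau : q_L R1 -> q_L R2,
    is_hom tau /\ surjective tau /\
    (forall g, q_eta R2 g = tau (q_eta R1 g)) /\
    (forall x, q_E R1 x -> q_E R2 (tau x)) /\
    ((exists x, tau x = gone /\ x <> gone) \/
     (injective tau /\ exists y, q_E R2 y /\ ~ (exists x, q_E R1 x /\ tau x = y))).

Arguments lq_gt {G} R1 R2.

(* Main.v *)
From Stdlib Require Import Classical ClassicalEpsilon FunctionalExtensionality ProofIrrelevance List Lia Arith.
Require Import Defs.

Lemma mulVr (A : Group) (x : A) : gmul x (ginv x) = gone.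
Proof.
  transitivity (gmul (gmul (ginv (ginv x)) (ginv x)) (gmul x (ginv x))).
  - rewrite gmulVl, gmul1l; reflexivity.
  - rewrite <- gmulA, (gmulA A (ginv x) x (ginv x)), gmulVl, gmul1l, gmulVl. reflexivity.
Qed.

Lemma mulr1 (A : Group) (x : A) : gmul x gone = x.
Proof. rewrite <- (gmulVl A x), gmulA, mulVr, gmul1l. reflexivity. Qed.

Lemma hom_one (A B : Group) (f : A -> B) : is_hom f -> f gone = gone.
Proof.
  intro hf. assert (H : f gone = gmul (f gone) (f gone)) by (rewrite <- hf, gmul1l; reflexivity).
  transitivity (gmul (gmul (ginv (f gone)) (f gone)) (f gone)).
  - rewrite gmulVl, gmul1l; reflexivity.
  - rewrite <- gmulA, <- H, gmulVl; reflexivity.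
Qed.

Lemma mul_eq1 (A : Group) (a b : A) : gmul a b = gone -> a = ginv b.
Proof.
  intro H. rewrite <- (mulr1 A a), <- (mulVr A b), gmulA, H, gmul1l. reflexivity.
Qed.

Lemma hom_inv (A B : Group) (f : A -> B) : is_hom f -> forall x, f (ginv x) = ginv (f x).
Proof.
  intros hf x. apply mul_eq1. rewrite <- hf, gmulVl. apply hom_one; auto.
Qed.

Lemma eq_of_mulV (A : Group) (x y : A) : gmul x (ginv y) = gone -> x = y.
Proof.
  intro H. rewrite <- (mulr1 A x), <- (gmulVl A y), gmulA, H, gmul1l. reflexivity.
Qed.

Section Prod.
Variable G : Group.
Variable Lf : nat -> Group.
Variable ef : forall m, G -> Lf m.
Hypothesis ehom : forall m, is_hom (ef m).

Definition PC := {x : forall m, Lf m | exists g, forall m, x m = ef m g}.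

Lemma pc_eq (x y : PC) : (forall m, proj1_sig x m = proj1_sig y m) -> x = y.
Proof.
  destruct x as [x hx], y as [y hy]; simpl; intro H.
  assert (x = y) by (apply functional_extensionality_dep; exact H). subst.
  f_equal; apply proof_irrelevance.
Qed.

Lemma pmul_ok (x y : PC) : exists g, forall m,
  gmul (proj1_sig x m) (proj1_sig y m) = ef m g.
Proof.
  destruct x as [x [g hg]], y as [y [g' hg']]; simpl.
  exists (gmul g g'); intro m; rewrite hg, hg', ehom; reflexivity.
Qed.

Lemma pone_ok : exists g, forall m, (gone : Lf m) = ef m g.
Proof. exists gone; intro m; rewrite hom_one; auto. Qed.

Lemma pinv_ok (x : PC) : exists g, forall m, ginv (proj1_sig x m) = ef m g.
Proof.
  destruct x as [x [g hg]]; simpl. exists (ginv g); intro m; rewrite hg, hom_inv; auto.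
Qed.

Definition pmul (x y : PC) : PC := exist _ _ (pmul_ok x y).
Definition pone : PC := exist _ _ pone_ok.
Definition pinv (x : PC) : PC := exist _ _ (pinv_ok x).

Lemma pmulA : forall x y z, pmul x (pmul y z) = pmul (pmul x y) z.
Proof. intros; apply pc_eq; intro; simpl; apply gmulA. Qed.
Lemma pmul1l : forall x, pmul pone x = x.
Proof. intros; apply pc_eq; intro; simpl; apply gmul1l. Qed.
Lemma pmulVl : forall x, pmul (pinv x) x = pone.
Proof. intros; apply pc_eq; intro; simpl; apply gmulVl. Qed.

Definition PG : Group := Build_Group PC pmul pone pinv pmulA pmul1l pmulVl.

Lemma pe_ok (g : G) : exists g', forall m, ef m g = ef m g'.
Proof. exists g; auto. Qed.
Definition pe (g : G) : PG := exist _ (fun m => ef m g) (pe_ok g).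
End Prod.

Fixpoint lst (G : Group) (Sg : list G) (m : nat) : list G :=
  match m with
  | 0 => gone :: Sg
  | S m => lst G Sg m ++ map ginv (lst G Sg m) ++
           flat_map (fun a => map (gmul a) (lst G Sg m)) (lst G Sg m)
  end.

Lemma lst_mono (G : Group) Sg m m' g : m <= m' -> In g (lst G Sg m) -> In g (lst G Sg m').
Proof.
  intros Hle Hin; induction Hle; auto. simpl; apply in_or_app; left; auto.
Qed.

Lemma gen_in (G : Group) Sg g : generated G Sg g -> exists m, In g (lst G Sg m).
Proof.
  induction 1.
  - exists 0; simpl; auto.
  - exists 0; simpl; auto.
  - destruct IHgenerated as [m Hm]. exists (S m); simpl.
    apply in_or_app; right; apply in_or_app; left; apply in_map; auto.
  - destruct IHgenerated1 as [a Ha], IHgenerated2 as [b Hb].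
    exists (S (max a b)); simpl.
    apply in_or_app; right; apply in_or_app; right.
    apply in_flat_map. exists x; split.
    + apply (lst_mono _ _ a); [lia|auto].
    + apply in_map; apply (lst_mono _ _ b); [lia|auto].
Qed.

Lemma ev_list {T : Type} (Q : T -> nat -> Prop) (l : list T) :
  (forall g, In g l -> eventually (Q g)) ->
  eventually (fun n => forall g, In g l -> Q g n).
Proof.
  induction l as [|a l IH]; intro H.
  - exists 0; intros n _ g [].
  - destruct (H a (or_introl eq_refl)) as [N1 H1].
    destruct IH as [N2 H2]. { intros g Hg; apply H; right; auto. }
    exists (max N1 N2); intros n Hn g [<-|Hg].
    + apply H1; lia.
    + apply H2; [lia|auto].
Qed.

Lemma lim_lemma (P Q : nat -> Prop) (i : nat) :
  (forall m, P (S m) -> P m) -> (forall m, i <= m -> (Q m <-> P m)) ->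
  (eventually Q <-> forall m, P m) /\ (eventually Q \/ eventually (fun m => ~ Q m)).
Proof.
  intros Hmon HQ.
  assert (Hd : forall m m', m <= m' -> P m' -> P m).
  { intros m m' Hle; induction Hle; auto. }
  split; [split|].
  - intros [N HN] m. apply (Hd m (max N (max i m))); [lia|].
    apply HQ; [lia|]. apply HN; lia.
  - intros H. exists i; intros; apply HQ; auto.
  - destruct (classic (forall m, P m)) as [H|H].
    + left; exists i; intros; apply HQ; auto.
    + right. apply not_all_ex_not in H as [M HM].
      exists (max i M); intros n Hn HQn. apply HM.
      apply (Hd M n); [lia|]. apply HQ; [lia|auto].
Qed.

Theorem proposition20 (G : Group) (R : nat -> Quot G) :
  finitely_generated G ->
  (forall m, is_limit_quotient (R m)) ->
  (forall m, lq_gt (R (S m)) (R m)) ->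
  exists R0 : Quot G, is_limit_quotient R0 /\ forall m, lq_gt R0 (R m).
Proof.
  intros [Sg HSg] HL Hgt.
  assert (homm : forall m, is_hom (q_eta (R m))) by (intro m; apply (HL m)).
  assert (surjm : forall m, surjective (q_eta (R m))) by (intro m; apply (HL m)).
  assert (Hs : forall m, {s : HomSeq G | convergent s /\
    (forall g : G, q_eta (R m) g = gone <-> eventually (fun n => hs_h s n g = gone)) /\
    (forall x : q_L (R m), q_E (R m) x <->
        exists g : G, q_eta (R m) g = x /\ eventually (fun n => elliptic (hs_h s n g)))}).
  { intro m; apply constructive_indefinite_description. apply (HL m). }
  set (s := fun m => proj1_sig (Hs m)).
  assert (Hconv : forall m, convergent (s m)) by (intro m; apply (proj2_sig (Hs m))).
  assert (HK : forall m g, q_eta (R m) g = gone <-> eventually (fun n => hs_h (s m) n g = gone))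
    by (intro m; apply (proj2_sig (Hs m))).
  assert (HE0 : forall m x, q_E (R m) x <->
        exists g : G, q_eta (R m) g = x /\ eventually (fun n => elliptic (hs_h (s m) n g)))
    by (intro m; apply (proj2_sig (Hs m))).
  set (PK := fun m g => q_eta (R m) g = gone).
  set (PE := fun m g => q_E (R m) (q_eta (R m) g)).
  assert (HE : forall m g, PE m g <-> eventually (fun n => elliptic (hs_h (s m) n g))).
  { intros m g; unfold PE; rewrite HE0; split.
    - intros [g' [Hg' [N HN]]].
      set (k := gmul (ginv g') g).
      assert (Hk : q_eta (R m) k = gone).
      { unfold k; rewrite homm, hom_inv, Hg', gmulVl by auto; reflexivity. }
      apply HK in Hk as [N' HN']. exists (max N N'); intros n Hn.
      assert (E : g = gmul g' k).
      { unfold k; rewrite gmulA, mulVr, gmul1l; reflexivity. }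
      rewrite E, (hs_hom G (s m) n), (HN' n), mulr1 by lia. apply HN; lia.
    - intro H; exists g; auto. }
  assert (Hev : forall m g, eventually (fun n =>
      (hs_h (s m) n g = gone <-> PK m g) /\ (elliptic (hs_h (s m) n g) <-> PE m g))).
  { intros m g. destruct (Hconv m g) as [C1 C2].
    assert (E1 : eventually (fun n => hs_h (s m) n g = gone <-> PK m g)).
    { destruct (classic (PK m g)) as [H|H].
      - pose proof H as H'. apply HK in H' as [N HN]. exists N; intros n Hn; split; auto.
      - destruct C1 as [C1|[N HN]]. { exfalso; apply H, HK, C1. }
        exists N; intros n Hn; split; intro X; [exfalso; exact (HN n Hn X)|contradiction]. }
    assert (E2 : eventually (fun n => elliptic (hs_h (s m) n g) <-> PE m g)).
    { destruct (classic (PE m g)) as [H|H].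
      - pose proof H as H'. apply HE in H' as [N HN]. exists N; intros n Hn; split; auto.
      - destruct C2 as [C2|[N HN]]. { exfalso; apply H, HE, C2. }
        exists N; intros n Hn; split; intro X; [exfalso; exact (HN n Hn X)|contradiction]. }
    destruct E1 as [N1 H1], E2 as [N2 H2]. exists (max N1 N2); intros n Hn; split;
      [apply H1|apply H2]; lia. }
  assert (Hn : forall m, exists n, forall g, In g (lst G Sg m) ->
      (hs_h (s m) n g = gone <-> PK m g) /\ (elliptic (hs_h (s m) n g) <-> PE m g)).
  { intro m. destruct (ev_list _ (lst G Sg m) (fun g _ => Hev m g)) as [N HN].
    exists N; apply HN; auto. }
  set (nf := fun m => proj1_sig (constructive_indefinite_description _ (Hn m))).
  assert (Hnf : forall m g, In g (lst G Sg m) ->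
      (hs_h (s m) (nf m) g = gone <-> PK m g) /\ (elliptic (hs_h (s m) (nf m) g) <-> PE m g)).
  { intro m; unfold nf; apply (proj2_sig (constructive_indefinite_description _ (Hn m))). }
  set (hs' := Build_HomSeq G (fun m => hs_fp (s m) (nf m)) (fun m => hs_h (s m) (nf m))
                (fun m => hs_hom G (s m) (nf m))).
  assert (Hmon : forall m g, (PK (S m) g -> PK m g) /\ (PE (S m) g -> PE m g)).
  { intros m g. destruct (Hgt m) as [tau [Ht [_ [Heta [HtE _]]]]]. unfold PK, PE.
    rewrite Heta. split.
    - intro H; rewrite H; apply hom_one; auto.
    - apply HtE. }
  assert (Hlim : forall g,
    (eventually (fun n => hs_h hs' n g = gone) <-> forall m, PK m g) /\
    (eventually (fun n => hs_h hs' n g = gone) \/ eventually (fun n => hs_h hs' n g <> gone)) /\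
    (eventually (fun n => elliptic (hs_h hs' n g)) <-> forall m, PE m g) /\
    (eventually (fun n => elliptic (hs_h hs' n g)) \/ eventually (fun n => ~ elliptic (hs_h hs' n g)))).
  { intro g. destruct (gen_in G Sg g (HSg g)) as [i Hi].
    destruct (lim_lemma (fun m => PK m g) (fun n => hs_h hs' n g = gone) i) as [A1 A2].
    { intro m; apply Hmon. }
    { intros m Hm; apply (Hnf m g (lst_mono G Sg i m g Hm Hi)). }
    destruct (lim_lemma (fun m => PE m g) (fun n => elliptic (hs_h hs' n g)) i) as [B1 B2].
    { intro m; apply Hmon. }
    { intros m Hm; apply (Hnf m g (lst_mono G Sg i m g Hm Hi)). }
    auto. }
  set (L := PG G (fun m => q_L (R m)) (fun m => q_eta (R m)) homm).
  set (eta0 := (pe G (fun m => q_L (R m)) (fun m => q_eta (R m)) homm : G -> L)).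
  exists (Build_Quot G L eta0
            (fun x => exists g, eta0 g = x /\ eventually (fun n => elliptic (hs_h hs' n g)))).
  split.
  - split; [|split].
    + intros x y. apply pc_eq; intro m; simpl. apply homm.
    + intros [x [g hg]]. exists g. apply pc_eq; intro m; simpl; auto.
    + exists hs'. split; [|split].
      * intro g; split; apply Hlim.
      * intro g; simpl. split; intro H0.
        -- apply (proj2 (proj1 (Hlim g))). intro m.
           apply (f_equal (fun x : L => proj1_sig x m)) in H0. exact H0.
        -- apply pc_eq; intro m; apply (proj1 (proj1 (Hlim g)) H0).
      * intro x; simpl; reflexivity.
  - intro m. exists (fun x : L => proj1_sig x m). simpl. split; [|split; [|split; [|split]]].
    + intros x y; reflexivity.
    + intro y. destruct (surjm m y) as [g Hg]. exists (eta0 g); exact Hg.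
    + intro g; reflexivity.
    + intros x [g [Hg Hev']]. subst x. apply (proj1 (proj2 (proj2 (Hlim g)))) with (m := m) in Hev'.
      exact Hev'.
    + destruct (classic (exists x : L, proj1_sig x m = gone /\ x <> gone)) as [Hk|Hk];
        [left; exact Hk|right].
      split.
      * intros x y Hxy. apply NNPP; intro Hne. apply Hk.
        exists (@gmul L x (ginv (y : L))). split.
        -- simpl. rewrite Hxy; apply mulVr.
        -- intro E; apply Hne; exact (eq_of_mulV L x y E).
      * destruct (Hgt m) as [tau [Ht [Hsur [Heta [HtE [Hc|[_ [y [Hy Hny]]]]]]]]].
        -- exfalso. destruct Hc as [x' [Hx' Hne]]. destruct (surjm (S m) x') as [g Hg].
           apply Hk. exists (eta0 g). split.
           ++ simpl. rewrite Heta, Hg; exact Hx'.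
           ++ intro E. apply (f_equal (fun x : L => proj1_sig x (S m))) in E.
              simpl in E. apply Hne; rewrite <- Hg; exact E.
        -- exists y; split; [exact Hy|]. intros [x [[g [Hg Hevg]] Hxy]].
           apply Hny. exists (q_eta (R (S m)) g). split.
           ++ apply (proj1 (proj2 (proj2 (Hlim g)))) with (m := S m) in Hevg. exact Hevg.
           ++ rewrite <- Heta, <- Hxy, <- Hg; reflexivity.
Qed.
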